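(* Let $S_1$ and $S_2$ be semigroups with finite generating sets $A_1$ and $A_2$ respectively. If $(S_1,d_{A_1})$ quasi-isometrically embeds into $(S_2,d_{A_2})$ and $(S_2,d_{A_2})$ quasi-isometrically embeds into $(S_1,d_{A_1})$, then $S_1$ and $S_2$ have the same growth type. In particular, growth type is a quasi-isometry invariant of finitely generated semigroups.
   Context: For a semigroup $S$ generated by a finite set $A$, $d_A(x,y)=\inf\{|w|:w\in A^*,\ xw=y\}$ ($A^*$ the free monoid on $A$, $\inf\emptyset=\infty$), a not necessarily symmetric distance with values in $\mathbb{R}^{\ge0}\cup\{\infty\}$. A map $f:X\to X'$ of such spaces is a quasi-isometric embedding if there are $1\le\lambda<\infty$, $0<\epsilon<\infty$ with $\frac1\lambda d(x,y)-\epsilon\le d'(f(x),f(y))\le\lambda d(x,y)+\epsilon$ for all $x,y$; it is a quasi-isometry if in addition there is $0\le\mu<\infty$ such that every $x'\in X'$ has some $x$ with $\max(d'(x',f(x)),d'(f(x),x'))\le\mu$. Semigroups $S,T$ are quasi-isometric if $(S,d_A)$, $(T,d_B)$ are quasi-isometric for some finite generating sets $A,B$. A growth function is a monotone non-decreasing function $\mathbb{N}\to\mathbb{N}$; write $\alpha_1\preccurlyeq\alpha_2$ if there are natural numbers $k_1,k_2\ge1$ with $\alpha_1(t)\le k_1\alpha_2(k_2t)$ for all $t$, and $\alpha_1\sim\alpha_2$ if $\alpha_1\preccurlyeq\alpha_2$ and $\alpha_2\preccurlyeq\alpha_1$; the growth type of $\alpha$ is its $\sim$-class. The growth function of $S$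 with respect to $A$ is $g_S(m)=|\{z\in S: l_A(z)\le m\}|$, where $l_A(z)$ is the minimal length of a nonempty word over $A$ representing $z$; its growth type (the growth type of $S$) does not depend on the finite generating set. *)

(* Defs.v *)
From Stdlib Require Import Reals List Arith ClassicalEpsilon.
From Coquelicot Require Import Coquelicot.
Open Scope R_scope.

Definition associative {S : Type} (mul : S -> S -> S) : Prop :=
  forall x y z, mul x (mul y z) = mul (mul x y) z.

Definition word_over {S : Type} (A : list S) (w : list S) : Prop :=
  List.Forall (fun a => In a A) w.

Definition act {S : Type} (mul : S -> S -> S) (x : S) (w : list S) : S :=
  fold_left mul w x.

Definition eval_ne {S : Type} (mul : S -> S -> S) (a : S) (w : list S) : S :=
  act mul a w.

Definition generates {S : Type} (mul : S -> S -> S) (A : list S) : Prop :=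
  forall z : S, exists a w, word_over A (a :: w) /\ eval_ne mul a w = z.

(* d_A(x,y) = inf { |w| : w in A^*, x w = y }, inf of empty set = +oo *)
Definition sdist {S : Type} (mul : S -> S -> S) (A : list S) (x y : S) : Rbar :=
  Glb_Rbar (fun r : R => exists w, word_over A w /\ act mul x w = y
                                   /\ r = INR (length w)).

(* quasi-isometric embedding between spaces with (asymmetric, extended) distances *)
Definition qi_embedding {X Y : Type} (d : X -> X -> Rbar) (d' : Y -> Y -> Rbar)
  (f : X -> Y) : Prop :=
  exists lam eps : R, 1 <= lam /\ 0 < eps /\
    forall x y : X,
      Rbar_le (Rbar_minus (Rbar_mult (/ lam) (d x y)) eps) (d' (f x) (f y)) /\
      Rbar_le (d' (f x) (f y)) (Rbar_plus (Rbar_mult lam (d x y)) eps).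

Definition quasi_isometry {X Y : Type} (d : X -> X -> Rbar) (d' : Y -> Y -> Rbar)
  (f : X -> Y) : Prop :=
  qi_embedding d d' f /\
  exists mu : R, 0 <= mu /\
    forall x' : Y, exists x : X,
      Rbar_le (d' x' (f x)) mu /\ Rbar_le (d' (f x) x') mu.

Definition qi_semigroups {S1 S2 : Type} (m1 : S1 -> S1 -> S1) (m2 : S2 -> S2 -> S2)
  : Prop :=
  exists (B1 : list S1) (B2 : list S2) (f : S1 -> S2),
    generates m1 B1 /\ generates m2 B2 /\ quasi_isometry (sdist m1 B1) (sdist m2 B2) f.

Definition short {S : Type} (mul : S -> S -> S) (A : list S) (m : nat) (z : S) : Prop :=
  exists a w, word_over A (a :: w) /\ (length (a :: w) <= m)%nat /\ eval_ne mul a w = z.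

Definition growth {S : Type} (mul : S -> S -> S) (A : list S) (m : nat) : nat :=
  epsilon (inhabits 0%nat) (fun n => exists l : list S,
     NoDup l /\ (forall z, In z l <-> short mul A m z) /\ length l = n).

Definition growth_le (a1 a2 : nat -> nat) : Prop :=
  exists k1 k2 : nat, (1 <= k1)%nat /\ (1 <= k2)%nat /\
    forall t, (a1 t <= k1 * a2 (k2 * t))%nat.

Definition growth_equiv (a1 a2 : nat -> nat) : Prop :=
  growth_le a1 a2 /\ growth_le a2 a1.

(* Main.v *)
Require Import Defs.
From Stdlib Require Import Reals List Arith ClassicalEpsilon.
From Coquelicot Require Import Coquelicot.
From Stdlib Require Import Lra Lia Psatz Classical ZArith.
Open Scope R_scope.

Fixpoint allwords {T : Type} (A : list T) (n : nat) : list (list T) :=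
  match n with
  | O => nil :: nil
  | Datatypes.S n' => nil :: flat_map (fun a => map (cons a) (allwords A n')) A
  end.

Lemma allwords_spec {T : Type} (A : list T) n w :
  In w (allwords A n) <-> word_over A w /\ (length w <= n)%nat.
Proof.
  revert w; induction n; intros w; simpl.
  - split.
    + intros [<-|[]]. split; [constructor|simpl; lia].
    + intros [_ H]. destruct w; simpl in H; [left; reflexivity| lia].
  - split.
    + intros [<-|H]. split; [constructor|simpl;lia].
      apply in_flat_map in H. destruct H as [a [Ha H]].
      apply in_map_iff in H. destruct H as [w' [<- Hw']].
      apply IHn in Hw'. destruct Hw' as [H1 H2].
      split. constructor; auto. simpl; lia.
    + intros [H1 H2]. destruct w as [|a w']. left; auto. right.
      apply in_flat_map. inversion H1; subst. exists a. split; auto.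
      apply in_map. apply IHn. split; auto. simpl in H2; lia.
Qed.

Definition within {T : Type} (mul : T -> T -> T) (A : list T) (x y : T) (n : nat) :=
  exists w, word_over A w /\ act mul x w = y /\ (length w <= n)%nat.

Lemma within_trans {T : Type} (mul : T -> T -> T) A x y z n m :
  within mul A x y n -> within mul A y z m -> within mul A x z (n + m).
Proof.
  intros [w1 [H1 [E1 L1]]] [w2 [H2 [E2 L2]]].
  exists (w1 ++ w2). split; [apply Forall_app; auto|]. split.
  - unfold act in *. rewrite fold_left_app, E1; auto.
  - rewrite length_app; lia.
Qed.

Lemma within_mono {T : Type} (mul : T -> T -> T) A x y n m :
  within mul A x y n -> (n <= m)%nat -> within mul A x y m.
Proof. intros [w [H1 [E1 L1]]] Hm. exists w; repeat split; auto; lia. Qed.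

Lemma fold_assoc {T : Type} (mul : T -> T -> T) : associative mul ->
  forall u x b, fold_left mul u (mul x b) = mul x (fold_left mul u b).
Proof.
  intros Has u; induction u as [|a u IH]; intros x b; simpl; auto.
  rewrite <- Has. apply IH.
Qed.

Lemma act_cons_assoc {T : Type} (mul : T -> T -> T) : associative mul ->
  forall x b u, act mul x (b :: u) = mul x (act mul b u).
Proof. intros Has x b u. unfold act. simpl. apply fold_assoc; auto. Qed.

Lemma sdist_lb {T : Type} (mul : T -> T -> T) A x y w :
  word_over A w -> act mul x w = y -> Rbar_le (sdist mul A x y) (Finite (INR (length w))).
Proof.
  intros Hw Ha. unfold sdist.
  destruct (Glb_Rbar_correct (fun r : R => exists w, word_over A w /\ act mul x w = y
                                   /\ r = INR (length w))) as [Hlb _].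
  apply Hlb. exists w; auto.
Qed.

Lemma min_exists (P : nat -> Prop) : forall n, P n -> exists m, P m /\ forall k, P k -> (m <= k)%nat.
Proof.
  intros n; induction n as [n IH] using lt_wf_ind; intros Pn.
  destruct (classic (exists k, (k < n)%nat /\ P k)) as [[k [Hk Pk]]|Hn].
  - exact (IH k Hk Pk).
  - exists n. split; auto. intros k Pk. destruct (le_lt_dec n k); auto.
    exfalso; apply Hn; eauto.
Qed.

Lemma sdist_cases {T : Type} (mul : T -> T -> T) A x y :
  (sdist mul A x y = p_infty /\ ~ exists w, word_over A w /\ act mul x w = y)
  \/ exists w, word_over A w /\ act mul x w = y /\ sdist mul A x y = Finite (INR (length w)).
Proof.
  destruct (classic (exists w, word_over A w /\ act mul x w = y)) as [[w0 [H0 E0]]|Hn].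
  - right.
    destruct (min_exists (fun n => exists w, word_over A w /\ act mul x w = y /\ length w = n)
                (length w0)) as [m [[w [Hw [Ew Lw]]] Hmin]].
    { exists w0; auto. }
    exists w. split; auto. split; auto. unfold sdist. apply is_glb_Rbar_unique. split.
    + intros r [w' [Hw' [E' ->]]]. simpl. apply le_INR. subst m. apply Hmin. eauto.
    + intros b Hb. apply Hb. exists w; auto.
  - left. split; auto. unfold sdist. apply is_glb_Rbar_unique. split.
    + intros r [w' [Hw' [E' ->]]]. exfalso; apply Hn; eauto.
    + intros b Hb. destruct b; simpl; auto.
Qed.

Lemma sdist_le_within {T : Type} (mul : T -> T -> T) A x y r :
  Rbar_le (sdist mul A x y) (Finite r) ->
  exists w, word_over A w /\ act mul x w = y /\ INR (length w) <= r.
Proof.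
  intros H. destruct (sdist_cases mul A x y) as [[E _]|[w [Hw [Ew E]]]];
    rewrite E in H; simpl in H. contradiction. eauto.
Qed.

Lemma sdist_within_fin {T : Type} (mul : T -> T -> T) A x y n :
  within mul A x y n -> exists d, sdist mul A x y = Finite d /\ d <= INR n.
Proof.
  intros [w0 [H0 [E0 L0]]].
  pose proof (sdist_lb mul A x y w0 H0 E0) as Hlb.
  destruct (sdist_cases mul A x y) as [[E Hn]|[w [Hw [Ew E]]]].
  - exfalso; apply Hn; eauto.
  - rewrite E in *. eexists; split; [reflexivity|]. simpl in Hlb.
    apply le_INR in L0. lra.
Qed.

Lemma UB {T1 T2 : Type} (m1 : T1 -> T1 -> T1) (m2 : T2 -> T2 -> T2) A1 A2 x y x' y' (lam eps : R) n :
  0 <= lam ->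
  Rbar_le (sdist m2 A2 x' y') (Rbar_plus (Rbar_mult lam (sdist m1 A1 x y)) eps) ->
  within m1 A1 x y n ->
  exists u, word_over A2 u /\ act m2 x' u = y' /\ INR (length u) <= lam * INR n + eps.
Proof.
  intros Hl H Hw. destruct (sdist_within_fin m1 A1 x y n Hw) as [d [Ed Hd]].
  rewrite Ed in H.
  assert (H' : Rbar_le (sdist m2 A2 x' y') (Finite (lam*d+eps))) by exact H.
  apply sdist_le_within in H'. clear H. rename H' into H.
  destruct H as [u [Hu [Eu Lu]]]. exists u; repeat split; auto.
  assert (lam * d <= lam * INR n) by (apply Rmult_le_compat_l; auto). lra.
Qed.

Lemma LB {T1 T2 : Type} (m1 : T1 -> T1 -> T1) (m2 : T2 -> T2 -> T2) A1 A2 x y x' y' (lam eps : R) n :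
  1 <= lam ->
  Rbar_le (Rbar_minus (Rbar_mult (/ lam) (sdist m1 A1 x y)) eps) (sdist m2 A2 x' y') ->
  within m2 A2 x' y' n ->
  exists w, word_over A1 w /\ act m1 x w = y /\ INR (length w) <= lam * (INR n + eps).
Proof.
  intros Hl H Hw. destruct (sdist_within_fin m2 A2 x' y' n Hw) as [d [Ed Hd]].
  rewrite Ed in H.
  assert (Hc : 0 < / lam) by (apply Rinv_0_lt_compat; lra).
  destruct (sdist_cases m1 A1 x y) as [[E _]|[w [Hw1 [Ew E]]]]; rewrite E in H.
  - exfalso. unfold Rbar_mult, Rbar_mult' in H. destruct (Rle_dec 0 (/ lam)); [|lra].
    destruct (Rle_lt_or_eq_dec 0 (/ lam) r); [|lra]. simpl in H. exact H.
  - simpl in H. exists w; repeat split; auto.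
    set (k := INR (length w)) in *.
    assert (k = lam * (/ lam * k)) by (field; lra). nra.
Qed.

Lemma nat_ge (r : R) : exists N : nat, r <= INR N.
Proof.
  destruct (archimed r) as [H1 _].
  destruct (ZArith_dec.Z_le_gt_dec 0 (up r)) as [Hp|Hn].
  - exists (Z.to_nat (up r)). rewrite INR_IZR_INZ, Z2Nat.id; auto. lra.
  - exists O. simpl. assert (IZR (up r) < 0) by (apply IZR_lt; lia). lra.
Qed.

Lemma dedup {T : Type} (L : list T) : exists l, NoDup l /\ forall z, In z l <-> In z L.
Proof.
  induction L as [|a L [l [Hn Hl]]].
  - exists nil. split; [constructor|]. tauto.
  - destruct (classic (In a l)) as [Ha|Ha].
    + exists l. split; auto. intros z. simpl. rewrite <- Hl. split; auto.
      intros [<-|H]; auto.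
    + exists (a :: l). split; [constructor; auto|]. intros z. simpl. rewrite Hl. tauto.
Qed.

Lemma growth_spec {T : Type} (mul : T -> T -> T) A m :
  exists l, NoDup l /\ (forall z, In z l <-> short mul A m z) /\ length l = growth mul A m.
Proof.
  unfold growth.
  set (P := fun n => exists l : list T,
     NoDup l /\ (forall z, In z l <-> short mul A m z) /\ length l = n).
  assert (HP : exists n, P n).
  { set (L0 := flat_map (fun w => match w with nil => nil | a :: w' => eval_ne mul a w' :: nil end)
                 (allwords A m)).
    destruct (dedup L0) as [l [Hn Hl]]. exists (length l), l. split; auto. split; auto.
    intros z. rewrite Hl. unfold L0. rewrite in_flat_map. split.
    - intros [w [Hw Hz]]. apply allwords_spec in Hw. destruct w as [|a w']; [destruct Hz|].
      destruct Hz as [<-|[]]. exists a, w'. tauto.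
    - intros [a [w [Hw [Hl' Hz]]]]. exists (a :: w). split.
      apply allwords_spec; auto. left; auto. }
  destruct (epsilon_spec (inhabits 0%nat) P HP) as [l Hl]. exists l. exact Hl.
Qed.

Lemma growth_le_cover {T : Type} (mul : T -> T -> T) A m (L : list T) :
  (forall z, short mul A m z -> In z L) -> (growth mul A m <= length L)%nat.
Proof.
  intros H. destruct (growth_spec mul A m) as [l [Hn [Hl <-]]].
  apply NoDup_incl_length; auto. intros z Hz. apply H, Hl, Hz.
Qed.

Lemma growth_pos {T : Type} (mul : T -> T -> T) A m z :
  short mul A m z -> (1 <= growth mul A m)%nat.
Proof.
  intros H. destruct (growth_spec mul A m) as [l [Hn [Hl <-]]].
  apply Hl in H. destruct l; [destruct H|simpl; lia].
Qed.

Lemma flat_map_length_const {X Y : Type} (h : X -> list Y) (l : list X) c :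
  (forall x, In x l -> length (h x) = c) -> length (flat_map h l) = (length l * c)%nat.
Proof.
  induction l as [|a l IH]; intros H; simpl; auto.
  rewrite length_app, H, IH; auto. intros; apply H; simpl; auto. simpl; auto.
Qed.

Lemma GC {T1 T2 : Type} (m1 : T1 -> T1 -> T1) (m2 : T2 -> T2 -> T2)
  (A1 : list T1) (A2 : list T2) (f : T1 -> T2) (C D : nat) :
  associative m2 -> generates m2 A2 ->
  (forall x y n, within m1 A1 x y n -> within m2 A2 (f x) (f y) (C * n + C)) ->
  (forall x y, f x = f y -> within m1 A1 x y D) ->
  growth_le (growth m1 A1) (growth m2 A2).
Proof.
  intros Hass Hgen H1 H2.
  set (W := length (allwords A1 D)).
  exists (Datatypes.S (2 * length A1 * W)), (Datatypes.S C). split; [lia|]. split; [lia|].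
  intros t.
  destruct t as [|t].
  { assert (H : (growth m1 A1 0 <= length (@nil T1))%nat).
    { apply growth_le_cover. intros z [a [w [_ [Hl _]]]]. simpl in Hl; lia. }
    simpl in H; lia. }
  destruct (growth_spec m2 A2 (Datatypes.S C * Datatypes.S t)) as [l2 [Hnd [Hl2 Hlen]]].
  set (g := growth m2 A2 (Datatypes.S C * Datatypes.S t)) in *.
  set (y := fun a (o : option T2) => match o with None => f a | Some v => m2 (f a) v end).
  set (rep := fun a o => epsilon (inhabits a) (fun z0 => f z0 = y a o)).
  set (L := flat_map (fun a => flat_map (fun o => map (fun w => act m1 (rep a o) w)
                (allwords A1 D)) (None :: map Some l2)) A1).
  assert (Hcov: forall z, short m1 A1 (Datatypes.S t) z -> In z L).
  { intros z [a [w [Hw [Hlw Hz]]]]. subst z.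
    inversion Hw as [|? ? Ha Hw']; subst.
    assert (Hwi : within m1 A1 a (eval_ne m1 a w) (length w)) by (exists w; repeat split; auto).
    destruct (H1 _ _ _ Hwi) as [u [Hu [Hfu Hlu]]].
    assert (Ho : exists o, In o (None :: map Some l2) /\ y a o = f (eval_ne m1 a w)).
    { destruct u as [|b u'].
      - exists None. split. left; auto. simpl in Hfu. simpl. auto.
      - exists (Some (eval_ne m2 b u')). split.
        + right. apply in_map. apply Hl2. exists b, u'. repeat split; auto.
          simpl length in *. nia.
        + simpl. rewrite <- Hfu. rewrite act_cons_assoc; auto. }
    destruct Ho as [o [Hino Hyo]].
    assert (Hrep : f (rep a o) = f (eval_ne m1 a w)).
    { unfold rep. rewrite <- Hyo. apply (epsilon_spec (inhabits a) (fun z0 => f z0 = y a o)).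
      exists (eval_ne m1 a w). auto. }
    destruct (H2 _ _ Hrep) as [w' [Hw'' [Hact Hlw']]].
    apply in_flat_map. exists a. split; auto.
    apply in_flat_map. exists o. split; auto.
    apply in_map_iff. exists w'. split; auto. apply allwords_spec. auto. }
  assert (Hg1 : (growth m1 A1 (Datatypes.S t) <= length L)%nat) by (apply growth_le_cover; auto).
  assert (HL : length L = (length A1 * (Datatypes.S g * W))%nat).
  { unfold L. apply flat_map_length_const. intros a _.
    rewrite (flat_map_length_const _ _ W). simpl. rewrite length_map. lia.
    intros o _. rewrite length_map. reflexivity. }
  destruct (Nat.eq_dec (length A1) 0) as [E0|Ne].
  { rewrite HL, E0 in Hg1. simpl in Hg1. lia. }
  assert (Hg : (1 <= g)%nat).
  { assert (Ha0 : exists a0, In a0 A1) by (destruct A1; simpl in *; [lia|eauto]).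
    destruct Ha0 as [a0 _].
    destruct (Hgen (f a0)) as [b [v [Hbv _]]].
    inversion Hbv as [|? ? Hb _]; subst.
    apply (growth_pos m2 A2 _ b). exists b, nil. split; [constructor; auto|].
    split; [simpl; nia|reflexivity]. }
  rewrite HL in Hg1. nia.
Qed.

Lemma qi_growth_le {T1 T2 : Type} (m1 : T1 -> T1 -> T1) (m2 : T2 -> T2 -> T2)
  (A1 : list T1) (A2 : list T2) (f : T1 -> T2) :
  associative m2 -> generates m2 A2 ->
  qi_embedding (sdist m1 A1) (sdist m2 A2) f ->
  growth_le (growth m1 A1) (growth m2 A2).
Proof.
  intros Hass Hgen [lam [eps [Hl [He Hq]]]].
  destruct (nat_ge (lam + eps)) as [C HC].
  destruct (nat_ge (lam * eps)) as [D HD].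
  apply (GC m1 m2 A1 A2 f C D); auto.
  - intros x y n Hw. destruct (Hq x y) as [_ Hup].
    destruct (UB m1 m2 A1 A2 x y (f x) (f y) lam eps n ltac:(lra) Hup Hw) as [u [Hu [Eu Lu]]].
    exists u; repeat split; auto. apply INR_le. rewrite plus_INR, mult_INR.
    assert (0 <= INR n) by apply pos_INR. nra.
  - intros x y E. destruct (Hq x y) as [Hlo _].
    destruct (LB m1 m2 A1 A2 x y (f x) (f y) lam eps 0 Hl Hlo) as [w [Hw [Ew Lw]]].
    { exists nil. repeat split; auto. constructor. }
    exists w; repeat split; auto. apply INR_le. simpl in Lw. lra.
Qed.

Lemma qinv_growth_le {T1 T2 : Type} (m1 : T1 -> T1 -> T1) (m2 : T2 -> T2 -> T2)
  (B1 : list T1) (B2 : list T2) (f : T1 -> T2) :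
  quasi_isometry (sdist m1 B1) (sdist m2 B2) f -> associative m1 -> generates m1 B1 ->
  growth_le (growth m2 B2) (growth m1 B1).
Proof.
  intros [[lam [eps [Hl [He Hq]]]] [mu [Hmu Hsur]]] Hass Hgen.
  set (g := fun x' => proj1_sig (constructive_indefinite_description _ (Hsur x'))).
  assert (Hg : forall x', Rbar_le (sdist m2 B2 x' (f (g x'))) mu /\
                          Rbar_le (sdist m2 B2 (f (g x')) x') mu).
  { intros x'. unfold g. destruct (constructive_indefinite_description _ _) as [x Hx].
    simpl. exact Hx. }
  destruct (nat_ge mu) as [M HM].
  assert (Hw1 : forall x', within m2 B2 x' (f (g x')) M).
  { intros x'. destruct (Hg x') as [H _].
    destruct (sdist_le_within _ _ _ _ _ H) as [w [Hw [Ew Lw]]].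
    exists w; repeat split; auto. apply INR_le; lra. }
  assert (Hw2 : forall x', within m2 B2 (f (g x')) x' M).
  { intros x'. destruct (Hg x') as [_ H].
    destruct (sdist_le_within _ _ _ _ _ H) as [w [Hw [Ew Lw]]].
    exists w; repeat split; auto. apply INR_le; lra. }
  destruct (nat_ge (lam * (2 * INR M + eps) + lam)) as [C HC].
  apply (GC m2 m1 B2 B1 g C (M + M)); auto.
  - intros x' y' n Hw.
    assert (Ht : within m2 B2 (f (g x')) (f (g y')) (M + n + M)).
    { apply within_trans with y'; [apply within_trans with x'; auto|auto]. }
    destruct (Hq (g x') (g y')) as [Hlo _].
    destruct (LB m1 m2 B1 B2 (g x') (g y') (f (g x')) (f (g y')) lam eps _ Hl Hlo Ht)
      as [w [Hw' [Ew Lw]]].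
    exists w; repeat split; auto. apply INR_le. rewrite !plus_INR in Lw.
    rewrite plus_INR, mult_INR.
    assert (0 <= INR n) by apply pos_INR. assert (0 <= INR M) by apply pos_INR.
    assert (0 <= lam * (2 * INR M + eps)) by (apply Rmult_le_pos; lra).
    assert (lam <= INR C) by lra.
    assert (0 <= (INR C - lam) * INR n) by (apply Rmult_le_pos; lra).
    nra.
  - intros x' y' E. apply within_trans with (f (g x')); auto. rewrite E; auto.
Qed.

Lemma rep_bound {T : Type} (m : T -> T -> T) (A B : list T) :
  associative m -> generates m B ->
  exists c, forall a, In a A -> forall x, within m B x (m x a) c.
Proof.
  intros Hass Hgen. induction A as [|a A [c IH]].
  - exists O. intros a [].
  - destruct (Hgen a) as [b [v [Hbv Ea]]].
    exists (Nat.max c (length (b :: v))). intros a' [<-|Ha'] x.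
    + exists (b :: v). repeat split; auto.
      rewrite act_cons_assoc; auto. rewrite <- Ea. reflexivity. lia.
    + apply within_mono with c; auto. lia.
Qed.

Lemma within_change {T : Type} (m : T -> T -> T) (A B : list T) c :
  (forall a, In a A -> forall x, within m B x (m x a) c) ->
  forall w x, word_over A w -> within m B x (act m x w) (c * length w).
Proof.
  intros H w; induction w as [|a w IH]; intros x Hw.
  - exists nil. repeat split; auto. constructor. simpl; lia.
  - inversion Hw as [|? ? Ha Hw']; subst.
    replace (act m x (a :: w)) with (act m (m x a) w) by reflexivity.
    apply within_mono with (c + c * length w)%nat.
    + apply within_trans with (m x a); auto.
    + simpl; lia.
Qed.

Lemma gen_change {T : Type} (m : T -> T -> T) (A B : list T) :
  associative m -> generates m B -> growth_le (growth m A) (growth m B).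
Proof.
  intros Hass Hgen. destruct (rep_bound m A B Hass Hgen) as [c Hc].
  apply (GC m m A B (fun x => x) c 0); auto.
  - intros x y n [w [Hw [<- Hl]]].
    apply within_mono with (c * length w)%nat.
    + apply within_change with A; auto.
    + nia.
  - intros x y <-. exists nil. repeat split; auto. constructor.
Qed.

Lemma growth_le_trans a1 a2 a3 : growth_le a1 a2 -> growth_le a2 a3 -> growth_le a1 a3.
Proof.
  intros [k1 [k2 [? [? H]]]] [k1' [k2' [? [? H']]]].
  exists (k1 * k1')%nat, (k2' * k2)%nat. split; [nia|]. split; [nia|].
  intros t. specialize (H t). specialize (H' (k2 * t)%nat).
  replace (k2' * k2 * t)%nat with (k2' * (k2 * t))%nat by ring.
  apply (Nat.mul_le_mono_l _ _ k1) in H'. rewrite Nat.mul_assoc in H'. lia.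
Qed.

Theorem theorem6p5 :
  (forall (S1 S2 : Type) (m1 : S1 -> S1 -> S1) (m2 : S2 -> S2 -> S2)
          (A1 : list S1) (A2 : list S2),
     associative m1 -> associative m2 ->
     generates m1 A1 -> generates m2 A2 ->
     (exists f : S1 -> S2, qi_embedding (sdist m1 A1) (sdist m2 A2) f) ->
     (exists g : S2 -> S1, qi_embedding (sdist m2 A2) (sdist m1 A1) g) ->
     growth_equiv (growth m1 A1) (growth m2 A2))
  /\
  (forall (S1 S2 : Type) (m1 : S1 -> S1 -> S1) (m2 : S2 -> S2 -> S2),
     associative m1 -> associative m2 ->
     qi_semigroups m1 m2 ->
     forall (A1 : list S1) (A2 : list S2),
       generates m1 A1 -> generates m2 A2 ->
       growth_equiv (growth m1 A1) (growth m2 A2)).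
Proof.
  split.
  - intros S1 S2 m1 m2 A1 A2 H1 H2 G1 G2 [f Hf] [g Hg].
    split; eapply qi_growth_le; eauto.
  - intros S1 S2 m1 m2 H1 H2 [B1 [B2 [f [GB1 [GB2 Hqi]]]]] A1 A2 G1 G2. split.
    + apply growth_le_trans with (growth m1 B1); [apply gen_change; auto|].
      apply growth_le_trans with (growth m2 B2); [|apply gen_change; auto].
      apply qi_growth_le with f; auto. apply Hqi.
    + apply growth_le_trans with (growth m2 B2); [apply gen_change; auto|].
      apply growth_le_trans with (growth m1 B1); [|apply gen_change; auto].
      apply qinv_growth_le with f; auto.
Qed.
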